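(* Let $(T_+,T_-)$ be a tree diagram representing an element of the $3$-colorable subgroup $\mathcal{F}$. Then for every leaf, the path from that leaf to the root of $T_+$ and the path from that leaf to the root of $T_-$ have lengths of the same parity. Equivalently, $|\alpha_k^+|\equiv|\alpha_k^-|\pmod 2$ for every $k$, where $\alpha_k^\pm$ is the binary word of the $k$-th leaf of $T_\pm$.
   Context: Thompson's group $F$ is the group of piecewise linear homeomorphisms of $[0,1]$ that are differentiable except at finitely many dyadic rationals with slopes in $2^{\mathbb{Z}}$. A tree diagram $(T_+,T_-)$ is a pair of finite rooted planar binary trees with the same number $n$ of leaves. Vertices are encoded by binary path words ($0$ = left, $1$ = right). The diagram represents the element mapping $[.\alpha_k^+,.\alpha_k^++2^{-|\alpha_k^+|}]$ affinely onto $[.\alpha_k^-,.\alpha_k^-+2^{-|\alpha_k^-|}]$. Each element has a unique reduced diagram. The $3$-colorable subgroup $\mathcal{F}$ consists of the elements whose reduced diagram, drawn with $T_+$ having leaves at $(k,0)$ and root on $y=1$ and $T_-$ mirrored below with root on $y=-1$, divides the strip $\{-1\le y\le1\}$ into regions colorable with three colors so that regions sharing an edge differ. *)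

(* Defs.v *)
From mathcomp Require Import all_boot all_order all_algebra.
Set Implicit Arguments. Unset Strict Implicit. Unset Printing Implicit Defensive.
Import Order.TTheory GRing.Theory Num.Theory.

Inductive btree : Type := Leaf | Node of btree & btree.

(* Binary path words of the leaves, in left-to-right order
   (false = 0 = left, true = 1 = right). *)
Fixpoint leaves (t : btree) : seq (seq bool) :=
  match t with
  | Leaf => [:: [::]]
  | Node l r => map (cons false) (leaves l) ++ map (cons true) (leaves r)
  end.

Definition nleaves (t : btree) : nat := size (leaves t).

Local Open Scope ring_scope.

Fixpoint dval (w : seq bool) : rat :=
  match w with
  | [::] => 0
  | b :: w' => ((b : nat)%:R + dval w') / 2%:R
  end.

Definition dlen (w : seq bool) : rat := (2%:R)^-1 ^+ size w.

Fixpoint pl_eval (ps : seq (seq bool * seq bool)) (x : rat) : rat :=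
  match ps with
  | [::] => x
  | (a, b) :: ps' =>
      if (dval a <= x) && (x <= dval a + dlen a)
      then dval b + (x - dval a) * (dlen b / dlen a)
      else pl_eval ps' x
  end.

(* The element of F represented by the tree diagram (tp, tm), as a map on [0,1]
   (evaluated on rationals, which determines a continuous map). *)
Definition diag_fun (tp tm : btree) (x : rat) : rat :=
  pl_eval (zip (leaves tp) (leaves tm)) x.

Definition same_element (tp tm sp sm : btree) : Prop :=
  forall x : rat, 0 <= x <= 1 -> diag_fun tp tm x = diag_fun sp sm x.

Local Close Scope ring_scope.

Definition reduced (tp tm : btree) : Prop :=
  forall k, k.+1 < nleaves tp ->
    ~ ((exists u, nth [::] (leaves tp) k = rcons u false /\
                  nth [::] (leaves tp) k.+1 = rcons u true) /\
       (exists v, nth [::] (leaves tm) k = rcons v false /\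
                  nth [::] (leaves tm) k.+1 = rcons v true)).

(* Regions of the strip picture: region i (0 <= i <= n) is the region lying
   between leaf i-1 and leaf i (region 0: left of leaf 0; region n: right of
   leaf n-1).  The edge entering a (non-root) vertex whose subtree has leaves
   a..b separates regions a and b+1.  [edges_below t off] lists these
   adjacencies for the edge above t and all edges inside t, where the leaves
   of t are numbered from off. *)
Fixpoint edges_below (t : btree) (off : nat) : seq (nat * nat) :=
  match t with
  | Leaf => [:: (off, off.+1)]
  | Node l r => (off, off + nleaves t)
                  :: edges_below l off ++ edges_below r (off + nleaves l)
  end.

(* Convention: the
   root is attached to the boundary line, so the two outer regions (0 and n)
   lie on the two sides of the root and are adjacent; this is
   the edge (0, n) produced by [edges_below t 0]. *)
Definition tree_adj (t : btree) : seq (nat * nat) := edges_below t 0.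

Definition three_colorable (tp tm : btree) : Prop :=
  exists c : nat -> 'I_3,
    forall e, e \in tree_adj tp ++ tree_adj tm -> c e.1 != c e.2.

Definition in_3col_subgroup (tp tm : btree) : Prop :=
  exists sp sm : btree,
    [/\ nleaves sp = nleaves sm, reduced sp sm,
        same_element tp tm sp sm & three_colorable sp sm].

(* Main.v *)
Require Import Defs.
From mathcomp Require Import all_boot all_order all_algebra.
From mathcomp Require Import ring lra.
Import Order.TTheory GRing.Theory Num.Theory.

Fixpoint before (u v : seq bool) : bool :=
  match u, v with
  | b :: u', c :: v' => if b == c then before u' v' else (~~ b) && c
  | _, _ => false
  end.

Section Rat.
Local Open Scope ring_scope.

Lemma dlenS b w : dlen (b :: w) = 2%:R^-1 * dlen w.
Proof. by rewrite /dlen /= exprS. Qed.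

Lemma dval_cat p s : dval (p ++ s) = dval p + dlen p * dval s.
Proof.
elim: p => [|b p IH] /=; first by rewrite /dlen expr0 mul1r add0r.
by rewrite IH dlenS; field.
Qed.

Lemma dlen_cat p s : dlen (p ++ s) = dlen p * dlen s.
Proof. by rewrite /dlen size_cat exprD. Qed.

Lemma dlen_gt0 w : 0 < dlen w.
Proof. by rewrite /dlen exprn_gt0 // invr_gt0. Qed.

Lemma dval_bounds w : 0 <= dval w /\ dval w + dlen w <= 1.
Proof.
elim: w => [|b w [IH1 IH2]] /=; first by rewrite /dlen expr0 add0r.
rewrite dlenS; have hb0 : 0 <= ((b : nat)%:R : rat) by case: (b).
  have hb1 : ((b : nat)%:R : rat) <= 1 by case: (b).
have h := dlen_gt0 w. split; lra.
Qed.

Lemma before_le u v : before u v -> dval u + dlen u <= dval v.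
Proof.
elim: u v => [|b u IH] [|c v] //=.
have [hu1 hu2] := dval_bounds u; have [hv1 hv2] := dval_bounds v.
rewrite dlenS; case: eqP => [<- /IH h|].
  have hb0 : 0 <= ((b : nat)%:R : rat) by case: (b).
  have hb1 : ((b : nat)%:R : rat) <= 1 by case: (b).
  lra.
by case: b; case: c => //= _ _; lra.
Qed.

Lemma interior u r x : dval (u ++ r) < x < dval (u ++ r) + dlen (u ++ r) ->
  dval u < x < dval u + dlen u.
Proof.
rewrite dval_cat dlen_cat.
have [h1 h2] := dval_bounds r; have h3 := dlen_gt0 u.
have h4 : 0 <= dlen u * dval r by rewrite mulr_ge0 // ltW.
have h5 : dlen u * dval r + dlen u * dlen r <= dlen u.
  by rewrite -mulrDr ler_piMr // ltW.
lra.
Qed.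

Definition hit (a : seq bool) (x : rat) := (dval a <= x) && (x <= dval a + dlen a).

Lemma pl_eval_at ps k x : (k < size ps)%N ->
  (forall i, (i < k)%N -> ~~ hit (nth ([::],[::]) ps i).1 x) ->
  hit (nth ([::],[::]) ps k).1 x ->
  pl_eval ps x = dval (nth ([::],[::]) ps k).2 + (x - dval (nth ([::],[::]) ps k).1) *
     (dlen (nth ([::],[::]) ps k).2 / dlen (nth ([::],[::]) ps k).1).
Proof.
elim: ps k => [|[a b] ps IH] [|k] //= hk hi hh.
  by rewrite /hit in hh; rewrite hh.
have := hi 0%N isT; rewrite /= /hit => /negbTE ->.
apply: IH => // i hik; exact: (hi i.+1).
Qed.

End Rat.

Lemma l3 (x y z : 'I_3) : x != y -> y != z -> x != z -> (z - y = y - x)%R /\ (z - x = -(y-x))%R.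
Proof.
case: x => [[|[|[|m]]] Hx] //; case: y => [[|[|[|n]]] Hy] //; case: z => [[|[|[|p]]] Hz] //;
 move=> *; split; apply/val_inj => //=.
Qed.
Lemma l4 (x : 'I_3) : x = (- x)%R -> x = 0%R.
Proof. case: x => [[|[|[|m]]] Hx] // /(congr1 val) //= _; exact/val_inj. Qed.

Lemma nleavesN l r : nleaves (Node l r) = nleaves l + nleaves r.
Proof. by rewrite /nleaves /= size_cat !size_map. Qed.

Lemma nleaves_gt0 t : 0 < nleaves t.
Proof. elim: t => //= l IHl r _; rewrite nleavesN; exact: ltn_addr. Qed.

Lemma nth_leavesN l r i : i < nleaves (Node l r) ->
  nth [::] (leaves (Node l r)) i =
  if i < nleaves l then false :: nth [::] (leaves l) i
  else true :: nth [::] (leaves r) (i - nleaves l).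
Proof.
rewrite nleavesN => hi.
rewrite /= nth_cat size_map /nleaves; case: ifP => h.
  by rewrite (nth_map [::]).
rewrite (nth_map [::]) //. rewrite /nleaves in hi. move/negbT: h; rewrite -leqNgt => h. 
by rewrite ltn_subLR.
Qed.

Lemma color_tree (c : nat -> 'I_3) t off :
  (forall e, e \in edges_below t off -> c e.1 != c e.2) ->
  forall i, i < nleaves t ->
  (c (off + i)%N.+1 - c (off + i)%N)%R = (if odd (size (nth [::] (leaves t) i))
     then - (c (off + nleaves t)%N - c off) else c (off + nleaves t)%N - c off)%R.
Proof.
elim: t off => [|l IHl r IHr] off H i.
  move=> hi; have -> : i = 0 by case: i hi.
  rewrite /nleaves /=; have -> : off + 0 = off by rewrite addn0.
  by rewrite /nleaves /= addn1.
move=> hi; rewrite (nth_leavesN _ _ _ hi).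
have Hl : forall e, e \in edges_below l off -> c e.1 != c e.2.
  by move=> e he; apply: H; rewrite /= inE mem_cat he orbT.
have Hr : forall e, e \in edges_below r (off + nleaves l) -> c e.1 != c e.2.
  by move=> e he; apply: H; rewrite /= inE mem_cat he !orbT.
have e1 : c off != c (off + nleaves l).
  by apply: (Hl (off, off + nleaves l)); case: (l) => [|? ?]; rewrite /nleaves /= inE ?addn1 eqxx.
have e2 : c (off + nleaves l) != c (off + nleaves l + nleaves r)%N.
  by apply: (Hr (off + nleaves l, off + nleaves l + nleaves r)); case: (r) => [|? ?]; rewrite /nleaves /= inE ?addn1 eqxx.
have e3 : c off != c (off + nleaves (Node l r)).
  by apply: (H (off, off + nleaves (Node l r))); rewrite /= inE eqxx.
rewrite nleavesN addnA in e3 *.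
have [E1 E2] := l3 _ _ _ e1 e2 e3.
have [hil|hil] := ltnP i (nleaves l).
  rewrite IHl // /= E2; case: (odd _) => /=; rewrite ?opprK //.
have -> : (off + i = off + nleaves l + (i - nleaves l))%N by rewrite -addnA subnKC.
rewrite (IHr _ Hr); last by rewrite ltn_subLR // -nleavesN.
have E3 : (c (off + nleaves l + nleaves r)%N - c (off + nleaves l)%N)%R = (- (c (off + nleaves l + nleaves r)%N - c off))%R.
  by rewrite E1 E2 opprK.
by rewrite /= E3; case: (odd _); rewrite /= ?opprK.
Qed.

Section Rat2.
Local Open Scope ring_scope.

Lemma before_cons b u v : before (b :: u) (b :: v) = before u v.
Proof. by rewrite /= eqxx. Qed.

Lemma leaves_pairwise t : pairwise before (leaves t).
Proof.
elim: t => //= l IHl r IHr.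
rewrite pairwise_cat !pairwise_map allrel_mapl allrel_mapr.
apply/and3P; split.
- by apply/allrelP => x y _ _.
- by apply: sub_pairwise IHl => x y.
- by apply: sub_pairwise IHr => x y.
Qed.

Lemma cover s w : exists j, (j < nleaves s)%N /\
  exists r, w = nth [::] (leaves s) j ++ r \/ nth [::] (leaves s) j = w ++ r.
Proof.
elim: s w => [|l IHl r IHr] w.
  by exists 0%N; split => //; exists w; left.
case: w => [|b w].
  by exists 0%N; split; [exact: nleaves_gt0 | exists (nth [::] (leaves (Node l r)) 0); right].
case: b.
  have [j [hj [q hq]]] := IHr w.
  exists (nleaves l + j)%N; split; first by rewrite nleavesN ltn_add2l.
  rewrite nth_leavesN; last by rewrite nleavesN ltn_add2l.
  rewrite ltnNge leq_addr /= addKn; exists q.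
  by case: hq => ->; [left|right].
have [j [hj [q hq]]] := IHl w.
exists j; split; first by rewrite nleavesN ltn_addr.
rewrite nth_leavesN; last by rewrite nleavesN ltn_addr.
rewrite hj; exists q.
by case: hq => ->; [left|right].
Qed.

Lemma diag_at tp tm k x : nleaves tp = nleaves tm -> (k < nleaves tp)%N ->
  dval (nth [::] (leaves tp) k) < x < dval (nth [::] (leaves tp) k) + dlen (nth [::] (leaves tp) k) ->
  diag_fun tp tm x = dval (nth [::] (leaves tm) k) + (x - dval (nth [::] (leaves tp) k)) *
     (dlen (nth [::] (leaves tm) k) / dlen (nth [::] (leaves tp) k)).
Proof.
move=> hn hk hx; rewrite /diag_fun.
rewrite (@pl_eval_at _ k).
- by rewrite nth_zip.
- by rewrite size_zip -/(nleaves tp) -/(nleaves tm) -hn minnn.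
- move=> i hik; rewrite nth_zip //= /hit.
  have := leaves_pairwise tp => /(pairwiseP [::]) h.
  have hb := h i k (ltn_trans hik hk) hk hik.
  have hle := before_le _ _ hb.
  clear h hb; apply/negP => /andP [_ h2]; case/andP: hx => hx1 _; clear -hle h2 hx1; lra.
- rewrite nth_zip //= /hit; case/andP: hx => hx1 hx2; apply/andP; split; lra.
Qed.

End Rat2.

Lemma edge_root t off : (off, off + nleaves t) \in edges_below t off.
Proof. by case: t => [|l r]; rewrite /nleaves /= inE ?addn1 eqxx. Qed.

Lemma col_parity sp sm : nleaves sp = nleaves sm -> three_colorable sp sm ->
  forall j, j < nleaves sp ->
  odd (size (nth [::] (leaves sp) j)) = odd (size (nth [::] (leaves sm) j)).
Proof.
move=> hn [c hc] j hj.
have hp : forall e, e \in edges_below sp 0 -> c e.1 != c e.2.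
  by move=> e he; apply: hc; rewrite mem_cat he.
have hm : forall e, e \in edges_below sm 0 -> c e.1 != c e.2.
  by move=> e he; apply: hc; rewrite mem_cat he orbT.
have E1 := color_tree c sp 0 hp j hj.
have E2 := color_tree c sm 0 hm j (etrans (esym (f_equal (fun n => j < n) hn)) hj).
rewrite -hn in E2.
have hD : (c (0 + nleaves sp)%N - c 0)%R != 0%R.
  by rewrite subr_eq0 eq_sym; exact: (hp _ (edge_root sp 0)).
move: E1 E2; set D := (c (0 + nleaves sp)%N - c 0)%R in hD *.
case: (odd _); case: (odd _) => // -> h.
- by move: hD; rewrite (l4 D) ?eqxx // -{1}h opprK.
- by move: hD; rewrite (l4 D) ?eqxx // h.
Qed.

Section Rat3.
Local Open Scope ring_scope.

Lemma slope_eq a b a' b' : dlen b / dlen a = dlen b' / dlen a' ->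
  (size a + size b' = size a' + size b)%N.
Proof.
rewrite /dlen !exprVn -!natrX !invrK ![_^-1 * _]mulrC => /eqP.
rewrite eqr_div ?pnatr_eq0 ?expn_eq0 // -!natrM eqr_nat -!expnD eqn_exp2l //.
by move/eqP.
Qed.

Lemma main_eq tp tm sp sm k j W r1 r2 :
  nleaves tp = nleaves tm -> nleaves sp = nleaves sm ->
  same_element tp tm sp sm -> (k < nleaves tp)%N -> (j < nleaves sp)%N ->
  W = nth [::] (leaves tp) k ++ r1 -> W = nth [::] (leaves sp) j ++ r2 ->
  (size (nth [::] (leaves tp) k) + size (nth [::] (leaves sm) j) =
   size (nth [::] (leaves sp) j) + size (nth [::] (leaves tm) k))%N.
Proof.
move=> hn hsn hsame hk hj h1 h2.
set a := nth [::] (leaves tp) k in h1 *; set b := nth [::] (leaves tm) k.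
set a' := nth [::] (leaves sp) j in h2 *; set b' := nth [::] (leaves sm) j.
apply: slope_eq.
set q := dlen b / dlen a; set q' := dlen b' / dlen a'.
have [hW1 hW2] := dval_bounds W; have hW3 := dlen_gt0 W.
have key : forall x, dval W < x < dval W + dlen W ->
    dval b + (x - dval a) * q = dval b' + (x - dval a') * q'.
  move=> x hx.
  rewrite -(diag_at _ _ _ _ hn hk); last by apply: (interior _ r1); rewrite -h1.
  rewrite -(diag_at _ _ _ _ hsn hj); last by apply: (interior _ r2); rewrite -h2.
  apply: hsame; case/andP: hx => hx1 hx2; apply/andP; split; lra.
have k1 := key (dval W + dlen W / 4%:R).
have k2 := key (dval W + dlen W / 2%:R).
have : (dlen W / 4%:R) * (q - q') = 0.
  have -> : (dlen W / 4%:R) * (q - q') =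
     (dval b + (dval W + dlen W / 2%:R - dval a) * q - (dval b' + (dval W + dlen W / 2%:R - dval a') * q'))
     - (dval b + (dval W + dlen W / 4%:R - dval a) * q - (dval b' + (dval W + dlen W / 4%:R - dval a') * q')).
    by field.
  rewrite k1 ?k2 ?subrr ?subr0 //; apply/andP; split; lra.
move/eqP; rewrite mulf_eq0 => /orP [|]; last by rewrite subr_eq0 => /eqP.
move=> h; exfalso; move: h; rewrite mulf_eq0 invr_eq0 pnatr_eq0 orbF => /eqP h.
by move: hW3; rewrite h ltxx.
Qed.
End Rat3.

Theorem lemma2p6 (tp tm : btree) :
  nleaves tp = nleaves tm ->
  in_3col_subgroup tp tm ->
  forall k, k < nleaves tp ->
    odd (size (nth [::] (leaves tp) k)) = odd (size (nth [::] (leaves tm) k)).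
Proof.
move=> hn [sp [sm [hsn _ hsame hcol]]] k hk.
have [j [hj [r hr]]] := cover sp (nth [::] (leaves tp) k).
have [W [r1 [r2 [h1 h2]]]] : exists W r1 r2,
    W = nth [::] (leaves tp) k ++ r1 /\ W = nth [::] (leaves sp) j ++ r2.
  case: hr => h.
    by exists (nth [::] (leaves tp) k), [::], r; rewrite cats0.
  by exists (nth [::] (leaves sp) j), r, [::]; rewrite cats0.
have := main_eq _ _ _ _ _ _ _ _ _ hn hsn hsame hk hj h1 h2.
move/(congr1 odd); rewrite !oddD (col_parity _ _ hsn hcol _ hj).
by case: (odd _); case: (odd _); case: (odd _).
Qed.
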